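(* Consider DIVIDING. For all $n\in \mathbb{N}$, $\mathcal{SG}(n)=\Omega_2(n)$.
   Context: DIVIDING is the impartial normal-play game on positive integers (heaps) where a move replaces a heap $n$ by $m\ge 2$ equal heaps $k$ with $km=n$, the resulting heaps being played as a disjunctive sum; a heap of size $1$ is terminal. $\mathcal{SG}$ denotes the Sprague-Grundy value (mex rule; nim-sum for disjunctive sums). $\Omega_2(n)$ is the number of prime factors of $n$ where the odd primes are counted with multiplicity and the prime $2$ is counted without multiplicity (i.e. at most once). *)

(* Defs.v *)
From mathcomp Require Import all_boot.
Set Implicit Arguments. Unset Strict Implicit. Unset Printing Implicit Defensive.

Definition mex (s : seq nat) : nat :=
  find (fun i => i \notin s) (iota 0 (size s).+1).

Definition nimsum (s : seq nat) : nat := foldr Nat.lxor 0 s.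

(* A move replaces heap n by m >= 2 equal heaps of size k with k*m = n;
   the resulting position is a disjunctive sum of m copies of heap k,
   whose SG value is the nim-sum of m copies of SG(k).
   Fuel f >= n is always sufficient since k < n. *)
Fixpoint sg_fuel (f n : nat) : nat :=
  match f with
  | 0 => 0
  | f'.+1 =>
      mex [seq nimsum (nseq m (sg_fuel f' (n %/ m)))
          | m <- iota 2 n.-1 & m %| n]
  end.

Definition SG (n : nat) : nat := sg_fuel n n.

Definition Omega2 (n : nat) : nat :=
  (2 %| n) + \sum_(p <- primes n | p != 2) logn p n.

(* Main.v *)
From Stdlib Require Import PeanoNat.
Require Import Defs.
From mathcomp Require Import all_boot.
Set Implicit Arguments. Unset Strict Implicit.

Definition Oo (n : nat) : nat := \sum_(p <- primes n | p != 2) logn p n.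

Lemma Omega2E n : Omega2 n = (2 %| n) + Oo n.
Proof. by []. Qed.

Lemma Oo_range n N : 0 < n -> n < N ->
  Oo n = \sum_(p <- iota 0 N | p != 2) logn p n.
Proof.
move=> n0 nN.
rewrite /Oo !(big_mkcond (fun p => p != 2)) /=.
have hp : perm_eq ([seq x <- iota 0 N | mem (primes n) x] ++
     [seq x <- iota 0 N | predC (mem (primes n)) x]) (iota 0 N).
  by rewrite perm_filterC.
rewrite -(perm_big _ hp) big_cat /=.
rewrite [X in _ + X]big1_seq ?addn0; last first.
  move=> i /andP[_]; rewrite mem_filter /= => /andP[ip _].
  case: ifP => // _.
  by apply/eqP; rewrite eqn0Ngt logn_gt0.
apply: perm_big.
apply: uniq_perm; first exact: primes_uniq.
  by rewrite filter_uniq // iota_uniq.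
move=> x; rewrite mem_filter mem_iota /= add0n.
case xp: (x \in primes n) => //=.
move: xp; rewrite mem_primes => /and3P[_ _ xd].
by rewrite (leq_ltn_trans (dvdn_leq n0 xd) nN).
Qed.

Lemma Oo_mul a b : 0 < a -> 0 < b -> Oo (a * b) = Oo a + Oo b.
Proof.
move=> a0 b0.
have ab0 : 0 < a * b by rewrite muln_gt0 a0.
rewrite !(@Oo_range _ (a * b).+1) // ?ltnS ?leq_pmull ?leq_pmulr //.
rewrite -big_split /=; apply: eq_bigr => p _; exact: lognM.
Qed.

Lemma Oo1 : Oo 1 = 0.
Proof. by rewrite /Oo big_nil. Qed.

Lemma Oo_prime p : prime p -> p != 2 -> Oo p = 1.
Proof.
move=> pp p2; rewrite /Oo primes_prime // big_cons p2 big_nil logn_prime //.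
by rewrite eqxx.
Qed.

Lemma Oo_pos_ex n : 0 < Oo n -> exists p, [/\ prime p, p != 2 & p %| n].
Proof.
move=> h; case: (boolP (has (fun p => p != 2) (primes n))).
  by case/hasP=> p pn p2; exists p; move: pn; rewrite mem_primes => /and3P[].
move/hasPn=> nop; move: h; rewrite /Oo big1_seq // => i /andP[i2 ii].
by move: (nop i ii); rewrite i2.
Qed.

Lemma odd_prime p : prime p -> p != 2 -> odd p.
Proof. by move=> pp; case: (even_prime pp) => [->|]. Qed.

Lemma Oo_div n m : 0 < n -> m %| n -> Oo n = Oo (n %/ m) + Oo m.
Proof.
move=> n0 mn; have m0 := dvdn_gt0 n0 mn.
have q0 : 0 < n %/ m by rewrite divn_gt0 // dvdn_leq.
by rewrite -Oo_mul // divnK.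
Qed.

Lemma Oo_odd_pos m : odd m -> 1 < m -> 0 < Oo m.
Proof.
move=> om m1; case: (pdivP m1) => p pp pm.
have p2 : p != 2.
  apply/eqP=> e; move: pm; rewrite e dvdn2 om //.
by rewrite (@Oo_div m p) ?(ltnW m1) // (@Oo_prime p pp p2) addn1.
Qed.

Lemma two_div n m : odd m -> m %| n -> (2 %| n %/ m) = (2 %| n).
Proof.
move=> om mn; rewrite -{2}(divnK mn) Euclid_dvdM // [2 %| m]dvdn2 om orbF //.
Qed.

Lemma Oo_ex k : forall n, 0 < n -> k <= Oo n -> exists d, [/\ odd d, d %| n & Oo d = k].
Proof.
elim: k => [|k IH] n n0 kn; first by exists 1; rewrite dvd1n Oo1.
have [p [pp p2 pn]] : exists p, [/\ prime p, p != 2 & p %| n].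
  by apply: Oo_pos_ex; apply: leq_ltn_trans kn.
have q0 : 0 < n %/ p by rewrite divn_gt0 ?prime_gt0 // dvdn_leq.
move: kn; rewrite (Oo_div n0 pn) (@Oo_prime p pp p2) addn1 ltnS => kq.
case: (IH _ q0 kq) => d [od dq Od].
have d0 := dvdn_gt0 q0 dq.
exists (p * d); split.
- by rewrite oddM od odd_prime.
- by rewrite -(divnK pn) mulnC dvdn_pmul2r ?prime_gt0.
- by rewrite (Oo_mul (prime_gt0 pp) d0) (@Oo_prime p pp p2) Od add1n.
Qed.

Lemma nimsum_nseq m x : nimsum (nseq m x) = if odd m then x else 0.
Proof.
elim: m => [|m IH] //=; rewrite /nimsum /= -/(nimsum _) IH.
by case: (odd m) => /=; rewrite ?Nat.lxor_nilpotent ?Nat.lxor_0_r.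
Qed.

Lemma mexE s v : (forall i, i < v -> i \in s) -> v \notin s -> mex s = v.
Proof.
move=> lt nv.
have vs : v <= size s.
  rewrite -(size_iota 0 v); apply: uniq_leq_size; first exact: iota_uniq.
  by move=> i; rewrite mem_iota add0n => /lt.
rewrite /mex -(subnKC vs) -addnS iotaD find_cat.
have -> : has (fun i => i \notin s) (iota 0 v) = false.
  apply/hasPn => i; rewrite mem_iota add0n => /lt; by rewrite negbK.
by rewrite size_iota add0n /= nv addn0.
Qed.

From mathcomp Require Import zify.

Lemma mainmex n : 0 < n ->
  mex [seq (if odd m then Omega2 (n %/ m) else 0) | m <- iota 2 n.-1 & m %| n]
  = Omega2 n.
Proof.
move=> n0.
have memL m : (m \in [seq m <- iota 2 n.-1 | m %| n]) = (m %| n) && (2 <= m).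
  rewrite mem_filter mem_iota; case mn: (m %| n) => //=.
  have := dvdn_leq n0 mn; case: (2 <= m) => //=; lia.
apply: mexE.
- move=> i; rewrite Omega2E => hi; apply/mapP.
  case: (ltnP i (2 %| n)) => hb.
  + have e2 : (2 %| n) = true by case: (2 %| n) hb.
    exists 2; first by rewrite memL e2.
    by move: hb; rewrite e2 /=; lia.
  + have [d [od dn Od]] := @Oo_ex (Oo n - (i - (2 %| n))) n n0 (leq_subr _ _).
    have d0 := dvdn_gt0 n0 dn.
    have d1 : 1 < d.
      move: d0 Od; case: (d) => [|[|d']] //= _; rewrite Oo1; lia.
    exists d; first by rewrite memL dn.
    rewrite od Omega2E (two_div od dn).
    move: (Oo_div n0 dn); rewrite Od; lia.
- apply/mapP => [[m]]; rewrite memL => /andP[mn m2].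
  case: ifP => om.
  + rewrite !Omega2E (two_div om mn) (Oo_div n0 mn).
    have := Oo_odd_pos om m2; lia.
  + have e2 : (2 %| n) = true.
      by apply: dvdn_trans mn; rewrite dvdn2 om.
    by rewrite Omega2E e2.
Qed.

Lemma sg_fuel_eq n : forall f, 0 < n -> n <= f -> sg_fuel f n = Omega2 n.
Proof.
elim/ltn_ind: n => n IH [|f] n0 nf; first by move: nf; rewrite leqNgt n0.
rewrite /= -(mainmex n0); congr mex; apply/eq_in_map => m.
rewrite mem_filter mem_iota => /andP[mn /andP[m2 _]].
have m0 : 0 < m by lia.
have q0 : 0 < n %/ m by rewrite divn_gt0 // dvdn_leq.
have qn : n %/ m < n by rewrite ltn_Pdiv.
rewrite nimsum_nseq IH //; lia.
Qed.

Theorem mainTheorem9 (n : nat) : 0 < n -> SG n = Omega2 n.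
Proof. by move=> n0; rewrite /SG sg_fuel_eq. Qed.
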